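(* Let $n\ge 3$, $u>0$, and let $S=[A_0,\dots,A_n]$ be an $n$-simplex with $\|A_i-A_0\|^2=v_i$ for $1\le i\le n$ and $\|A_i-A_j\|^2=u$ for $1\le i<j\le n$. For $0\le j\le n$ let $S_j$ be the facet of $S$ obtained by removing the vertex $A_j$, and let $\mathcal{C}_j,\mathcal{D}_j$ be the Cayley–Menger and inner Cayley–Menger determinants of $S_j$. Put $\alpha=u+v_1+\cdots+v_n$ and $\beta=u^2+v_1^2+\cdots+v_n^2$. Then for $1\le j\le n$: $$\mathcal{C}_0=(-1)^n n u^{n-1},\qquad \mathcal{C}_j=(-u)^{n-3}\big[-\alpha^2+(n-1)\beta-nv_j^2+2\alpha v_j\big],$$ $$\mathcal{D}_0=(-1)^{n+1}u^n(n-1),$$ $$\mathcal{D}_j=(-u)^{n-2}\big[(n-2)\beta-\alpha^2+2\alpha u-(n-1)u^2-(n-1)v_j^2+2\alpha v_j-2uv_j\big].$$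
   Context: For an $m$-simplex $T=[B_0,\dots,B_m]$ with $b_{i,j}=\|B_i-B_j\|^2$, the Cayley–Menger determinant is the $(m+2)\times(m+2)$ determinant with rows/columns indexed by $-1,0,\dots,m$, entries $0$ on the diagonal, $1$ in the rest of row $-1$ and column $-1$, and $b_{i,j}$ otherwise; the inner Cayley–Menger determinant is $\det(b_{i,j})_{0\le i,j\le m}$. *)

(* Defs.v *)
From mathcomp Require Import all_boot all_order all_algebra.
Set Implicit Arguments. Unset Strict Implicit. Unset Printing Implicit Defensive.
Import Order.TTheory GRing.Theory Num.Theory.
Local Open Scope ring_scope.

Definition sqdist (R : realFieldType) (d : nat) (x y : 'rV[R]_d) : R :=
  \sum_(k < d) (x 0 k - y 0 k) ^+ 2.

Definition is_simplex (R : realFieldType) (d n : nat) (A : 'I_n.+1 -> 'rV[R]_d) : bool :=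
  row_free (\matrix_(i < n, k < d) (A (lift ord0 i) 0 k - A ord0 0 k)).

Definition inner_cm_mx (R : realFieldType) (d p : nat) (B : 'I_p -> 'rV[R]_d) : 'M[R]_p :=
  \matrix_(i < p, j < p) sqdist (B i) (B j).

(* Cayley-Menger matrix: row/column -1 is the first block row/column. *)
Definition cm_mx (R : realFieldType) (d p : nat) (B : 'I_p -> 'rV[R]_d) : 'M[R]_(1 + p) :=
  block_mx (0 : 'M[R]_1) (const_mx 1 : 'M[R]_(1, p))
           (const_mx 1 : 'M[R]_(p, 1)) (inner_cm_mx B).

Definition CM (R : realFieldType) (d p : nat) (B : 'I_p -> 'rV[R]_d) : R := \det (cm_mx B).
Definition innerCM (R : realFieldType) (d p : nat) (B : 'I_p -> 'rV[R]_d) : R :=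
  \det (inner_cm_mx B).

Definition facet (R : realFieldType) (d n : nat) (A : 'I_n.+1 -> 'rV[R]_d) (j : 'I_n.+1)
  : 'I_n -> 'rV[R]_d := fun k => A (lift j k).

(* Main.v *)
Require Import Defs.
From mathcomp Require Import all_boot all_order all_algebra.
From mathcomp Require Import ring.
Import Order.TTheory GRing.Theory Num.Theory.
Local Open Scope ring_scope.

Lemma sylvester (F : fieldType) p k (c : F) (U : 'M[F]_(p,k)) (V : 'M[F]_(k,p)) :
  c != 0 -> \det (c%:M + U *m V) * c ^+ k = c ^+ p * \det (c%:M + V *m U).
Proof.
move=> c0.
pose Q := block_mx (c%:M : 'M_p) (-U) V (1%:M : 'M_k).
have h1 : Q = block_mx 1%:M (-U) 0 1%:M *m block_mx (c%:M + U *m V) 0 V 1%:M.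
  rewrite mulmx_block !(mul1mx, mul0mx, mulmx0, mulmx1, addr0, add0r, mulNmx).
  by rewrite addrK.
have h2 : Q = block_mx c%:M 0 V 1%:M *m
     block_mx 1%:M (- (c^-1 *: U)) 0 (1%:M + c^-1 *: (V *m U)).
  rewrite mulmx_block !(mul1mx, mul0mx, mulmx0, mulmx1, addr0, add0r, mulNmx).
  rewrite mul_scalar_mx scalerN scalerA mulfV // scale1r mulmxN -scalemxAr.
  by rewrite addrCA addNr addr0.
have e1 : \det Q = \det (c%:M + U *m V).
  by rewrite h1 det_mulmx det_ublock det_lblock !det1 !mul1r mulr1.
have e2 : \det Q = c ^+ p * \det (1%:M + c^-1 *: (V *m U)).
  by rewrite h2 det_mulmx det_ublock det_lblock !det1 det_scalar !mulr1 mul1r.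
rewrite -e1 e2 -mulrA; congr (_ * _).
rewrite mulrC -detZ scalerDr scalerA mulfV // scale1r.
by rewrite -(scalemx1 _ c) /=.
Qed.

Definition shiftf {F : Type} (f : nat -> nat -> F) (i0 j0 a b : nat) := f (bump i0 a) (bump j0 b).

Lemma minor_nat (F : comRingType) k (f : nat -> nat -> F) (i0 j0 : 'I_k.+1) :
  row' i0 (col' j0 (\matrix_(i < k.+1, j < k.+1) f i j)) =
  \matrix_(i < k, j < k) shiftf f i0 j0 i j :> 'M_k.
Proof. by apply/matrixP => i j; rewrite !mxE. Qed.

Lemma det_nat1 (F : comRingType) (f : nat -> nat -> F) :
  \det (\matrix_(i < 1, j < 1) f i j) = f 0%N 0%N.
Proof. by rewrite det_mx11 mxE. Qed.

Lemma det_nat2 (F : comRingType) (f : nat -> nat -> F) :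
  \det (\matrix_(i < 2, j < 2) f i j) = f 0%N 0%N * f 1%N 1%N - f 0%N 1%N * f 1%N 0%N.
Proof.
rewrite (expand_det_row _ 0) !big_ord_recl big_ord0 /cofactor !minor_nat !det_nat1 !mxE /=.
rewrite /shiftf /bump /=; ring.
Qed.

Lemma det_nat3 (F : comRingType) (f : nat -> nat -> F) :
  \det (\matrix_(i < 3, j < 3) f i j) =
    f 0%N 0%N * (f 1%N 1%N * f 2%N 2%N - f 1%N 2%N * f 2%N 1%N)
  - f 0%N 1%N * (f 1%N 0%N * f 2%N 2%N - f 1%N 2%N * f 2%N 0%N)
  + f 0%N 2%N * (f 1%N 0%N * f 2%N 1%N - f 1%N 1%N * f 2%N 0%N).
Proof.
rewrite (expand_det_row _ 0) !big_ord_recl big_ord0 /cofactor !minor_nat !det_nat2 !mxE /=.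
rewrite /shiftf /bump /=; ring.
Qed.

Definition smallG {F : ringType} (p : nat) (c : F) (Uf Vf : nat -> nat -> F) (l l' : nat) : F :=
  c *+ (l == l')%N + \sum_(a < p) Vf l a * Uf a l'.

Lemma det_lowrank (F : fieldType) p k (c : F) (M : 'M[F]_p) (Uf Vf : nat -> nat -> F) :
  c != 0 ->
  (forall a b : 'I_p, M a b = c *+ (nat_of_ord a == nat_of_ord b)%N + \sum_(l < k) Uf a l * Vf l b) ->
  \det M * c ^+ k = c ^+ p * \det (\matrix_(l < k, l' < k) smallG p c Uf Vf l l').
Proof.
move=> c0 hM.
have -> : M = c%:M + (\matrix_(a < p, l < k) Uf a l) *m (\matrix_(l < k, b < p) Vf l b).
  by apply/matrixP => a b; rewrite hM !mxE; congr (_ + _); apply: eq_bigr => l _; rewrite !mxE.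
rewrite sylvester //; congr (_ * \det _).
apply/matrixP => l l'; rewrite !mxE /smallG; congr (_ + _).
by apply: eq_bigr => a _; rewrite !mxE.
Qed.

Definition cmE {R : ringType} (E : nat -> nat -> R) (a b : nat) : R :=
  match a, b with
  | O, O => 0%R
  | O, _ => 1%R
  | _, O => 1%R
  | a'.+1, b'.+1 => E a' b'
  end.

Lemma cm_mx_nat (R : realFieldType) d p (B : 'I_p -> 'rV[R]_d) (E : nat -> nat -> R) :
  (forall a b : 'I_p, inner_cm_mx B a b = E a b) ->
  forall a b : 'I_p.+1, cm_mx B a b = cmE E a b.
Proof.
move=> hE a b.
have e0 : (ord0 : 'I_p.+1) = lshift p (0 : 'I_1) by apply/val_inj.
have eS : forall x : 'I_p, lift ord0 x = rshift 1 x :> 'I_p.+1 by move=> x; apply/val_inj.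
case: (unliftP ord0 a) => [a'|] ->; case: (unliftP ord0 b) => [b'|] ->.
- by rewrite !eS block_mxEdr hE.
- by rewrite eS e0 block_mxEdl mxE.
- by rewrite eS e0 block_mxEur mxE.
- by rewrite e0 block_mxEul mxE.
Qed.

Lemma sqdist_refl (R : realFieldType) d (x : 'rV[R]_d) : sqdist x x = 0.
Proof. by rewrite /sqdist big1 // => k _; rewrite subrr expr0n. Qed.

Lemma sqdist_sym (R : realFieldType) d (x y : 'rV[R]_d) : sqdist x y = sqdist y x.
Proof. by rewrite /sqdist; apply: eq_bigr => k _; rewrite -sqrrN opprB. Qed.

Definition E0 {R : ringType} (u : R) (a b : nat) : R := if (a == b)%N then 0 else u.
Definition Ej {R : ringType} (u : R) (w : nat -> R) (a b : nat) : R :=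
  if (a == b)%N then 0 else match a, b with O, _ => w b | _, O => w a | _, _ => u end.

Lemma facet0E (R : realFieldType) d n (u : R) (A : 'I_n.+1 -> 'rV[R]_d) :
  (forall i j : 'I_n.+1, i != ord0 -> j != ord0 -> i != j -> sqdist (A i) (A j) = u) ->
  forall a b : 'I_n, inner_cm_mx (facet A ord0) a b = E0 u a b.
Proof.
move=> hu a b; rewrite mxE /facet /E0.
case: eqP => [/val_inj -> | hab]; first by rewrite sqdist_refl.
apply: hu; rewrite ?neq_lift //.
by apply/negP => /eqP /lift_inj /val_eqP /eqP.
Qed.

Lemma facetjE (R : realFieldType) d n (u : R) (v : nat -> R) (A : 'I_n.+1 -> 'rV[R]_d) (j : 'I_n.+1) :
  j != ord0 ->
  (forall i : 'I_n.+1, i != ord0 -> sqdist (A i) (A ord0) = v i) ->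
  (forall i j : 'I_n.+1, i != ord0 -> j != ord0 -> i != j -> sqdist (A i) (A j) = u) ->
  forall a b : 'I_n, inner_cm_mx (facet A j) a b = Ej u (fun k => v (bump j k)) a b.
Proof.
move=> j0 hv hu a b; rewrite mxE /facet /Ej.
have jpos : (0 < j)%N by rewrite lt0n.
have l0 : forall x : 'I_n, (nat_of_ord x == 0)%N = (lift j x == ord0).
  move=> x; rewrite -val_eqE /= /bump; case: x => [[|x] hx] /=.
    by rewrite leqNgt jpos.
  by rewrite addnS.
case: eqP => [/val_inj -> | hab]; first by rewrite sqdist_refl.
have hne : lift j a != lift j b by apply/negP => /eqP /lift_inj /val_eqP /eqP.
case: a hab hne l0 => [[|a] ha] hab hne l0 /=.
- have /eqP e : lift j (Ordinal ha) == ord0 by rewrite -l0.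
  rewrite e sqdist_sym hv //.
  rewrite -l0; case: b hab {hne} => [[|b] hb] hab //=.
- case: b hab hne l0 => [[|b] hb] hab hne l0 /=.
  + have /eqP e : lift j (Ordinal hb) == ord0 by rewrite -l0.
    by rewrite e hv // -l0.
  + by apply: hu => //; rewrite -l0.
Qed.

Section S.
Context {R : comRingType}.
Lemma sum0l m (f : 'I_m -> R) : \sum_(i < m) 0 * f i = 0.
Proof. by rewrite big1 // => i _; rewrite mul0r. Qed.
Lemma sumr0' m (f : 'I_m -> R) : \sum_(i < m) f i * 0 = 0.
Proof. by rewrite big1 // => i _; rewrite mulr0. Qed.
Lemma sum1l m (f : 'I_m -> R) : \sum_(i < m) 1 * f i = \sum_(i < m) f i.
Proof. by apply: eq_bigr => i _; rewrite mul1r. Qed.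
Lemma sumr1' m (f : 'I_m -> R) : \sum_(i < m) f i * 1 = \sum_(i < m) f i.
Proof. by apply: eq_bigr => i _; rewrite mulr1. Qed.
Lemma sumc m (c : R) : \sum_(i < m) c = c * m%:R.
Proof. by rewrite sumr_const card_ord mulr_natr. Qed.
Lemma sumcl m (c : R) (f : 'I_m -> R) : \sum_(i < m) c * f i = c * \sum_(i < m) f i.
Proof. by rewrite mulr_sumr. Qed.
End S.

Ltac sums := rewrite ?sum0l ?sumr0' ?sum1l ?sumr1' ?sumc ?sumcl.

Definition U0 {R : ringType} (a l : nat) : R := 1.
Definition V0 {R : ringType} (u : R) (l b : nat) : R := u.
Definition U0c {R : ringType} (a l : nat) : R :=
  match a, l with O, O => 1 | O, _ => 0 | _.+1, 1 => 1 | _, _ => 0 end.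
Definition V0c {R : ringType} (u : R) (l b : nat) : R :=
  match l, b with O, O => u | O, _ => 1 | _, O => 1 | _, _ => u end.
Definition Ujin {R : ringType} (w : nat -> R) (a l : nat) : R :=
  match a, l with O, O => 1 | O, _ => 0 | _.+1, 1 => w a | _.+1, 2 => 1 | _, _ => 0 end.
Definition Vjin {R : ringType} (u : R) (w : nat -> R) (l b : nat) : R :=
  match l, b with O, O => u | O, _ => w b | 1, O => 1 | 1, _ => 0 | _, O => 0 | _, _ => u end.
Definition Ujc {R : ringType} (w : nat -> R) (a l : nat) : R :=
  match a, l with O, O => 1 | 1, 1 => 1 | _.+2, 2 => 1 | a'.+2, 3 => w a'.+1 | _, _ => 0 end.
Definition Vjc {R : ringType} (u : R) (w : nat -> R) (l b : nat) : R :=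
  match l with
  | O => match b with O => u | _ => 1 end
  | 1 => match b with O => 1 | 1 => u | b'.+2 => w b'.+1 end
  | 2 => match b with O => 1 | 1 => 0 | _ => u end
  | _ => match b with 1 => 1 | _ => 0 end
  end.

Lemma L0in (R : comRingType) m (u : R) :
  \det (\matrix_(l < 1, l' < 1) smallG m.+1 (-u) U0 (V0 u) l l') = u * m%:R.
Proof.
rewrite det_nat1 /smallG /U0 /V0 /=; sums.
by rewrite -natr1; ring.
Qed.

Lemma L0cm (R : comRingType) m (u : R) :
  \det (\matrix_(l < 2, l' < 2) smallG m.+2 (-u) U0c (V0c u) l l') = - (m.+1)%:R.
Proof.
rewrite det_nat2 /smallG !big_ord_recl /=; sums.
ring.
Qed.

Lemma Ljin (R : comRingType) m (u : R) (w : nat -> R) :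
  \det (\matrix_(l < 3, l' < 3) smallG m.+1 (-u) (Ujin w) (Vjin u w) l l') =
  let S1 := \sum_(i < m) w i.+1 in let S2 := \sum_(i < m) w i.+1 * w i.+1 in
  u * S1 ^+ 2 - S2 * (u * m%:R - u).
Proof.
rewrite det_nat3 /smallG !big_ord_recl /=; sums.
ring.
Qed.

Lemma Ljc (R : comRingType) m (u : R) (w : nat -> R) :
  \det (\matrix_(l < 4, l' < 4) smallG m.+2 (-u) (Ujc w) (Vjc u w) l l') =
  let S1 := \sum_(i < m) w i.+1 in let S2 := \sum_(i < m) w i.+1 * w i.+1 in
  m%:R * S2 - 2 * u * S1 - S1 ^+ 2 + u ^+ 2 * m%:R - u ^+ 2.
Proof.
rewrite (expand_det_row _ 0) !big_ord_recl big_ord0 /cofactor !minor_nat !det_nat3 !mxE.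
rewrite /shiftf /bump /smallG /=.
rewrite !big_ord_recl /=; sums.
ring.
Qed.

Lemma H0in (R : comRingType) n (u : R) (a b : 'I_n) :
  E0 u a b = (-u) *+ (nat_of_ord a == nat_of_ord b)%N + \sum_(l < 1) U0 a l * V0 u l b.
Proof.
rewrite big_ord1 /E0 /U0 /V0; case: eqP => _; rewrite ?mulr1n ?mulr0n; ring.
Qed.

Lemma H0cm (R : comRingType) n (u : R) (a b : 'I_n.+1) :
  cmE (E0 u) a b = (-u) *+ (nat_of_ord a == nat_of_ord b)%N + \sum_(l < 2) U0c a l * V0c u l b.
Proof.
rewrite !big_ord_recl big_ord0 /=.
case: a => [[|a] ha]; case: b => [[|b] hb] /=; rewrite /E0 /U0c /V0c /=;
  rewrite ?eqSS; try case: eqP => _; rewrite ?mulr1n ?mulr0n; ring.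
Qed.

Lemma Hjin (R : comRingType) n (u : R) w (a b : 'I_n) :
  Ej u w a b = (-u) *+ (nat_of_ord a == nat_of_ord b)%N + \sum_(l < 3) Ujin w a l * Vjin u w l b.
Proof.
rewrite !big_ord_recl big_ord0 /=.
case: a => [[|a] ha]; case: b => [[|b] hb] /=; rewrite /Ej /Ujin /Vjin /=;
  rewrite ?eqSS; try case: eqP => _; rewrite ?mulr1n ?mulr0n; ring.
Qed.

Lemma Hjc (R : comRingType) n (u : R) w (a b : 'I_n.+1) :
  cmE (Ej u w) a b = (-u) *+ (nat_of_ord a == nat_of_ord b)%N + \sum_(l < 4) Ujc w a l * Vjc u w l b.
Proof.
rewrite !big_ord_recl big_ord0 /=.
case: a => [[|[|a]] ha]; case: b => [[|[|b]] hb] /=; rewrite /cmE /Ej /Ujc /Vjc /=;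
  rewrite ?eqSS; try case: eqP => _; rewrite ?mulr1n ?mulr0n; ring.
Qed.

Lemma cancel_pow (F : fieldType) (c X Y : F) m k :
  c != 0 -> X * c ^+ k = c ^+ (k + m) * Y -> X = c ^+ m * Y.
Proof.
move=> c0; rewrite exprD mulrC -!mulrA => /mulfI; apply; exact: expf_neq0.
Qed.

Lemma sum_facet (R : comRingType) n (f : nat -> R) (j : 'I_n.+2) : j != ord0 ->
  \sum_(1 <= i < n.+2) f i = f j + \sum_(i < n) f (bump j i.+1).
Proof.
move=> j0; rewrite big_add1 /= big_mkord.
case: j j0 => [[|j] hj] // _.
rewrite (bigD1_ord (Ordinal (hj : (j < n.+1)%N))) //=; congr (_ + _).
by apply: eq_bigr => i _; rewrite /bump /= addnS.
Qed.

Theorem theorem4p2 (R : realFieldType) (d n : nat) (u : R) (v : nat -> R)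
  (A : 'I_n.+1 -> 'rV[R]_d) :
  (3 <= n)%N -> 0 < u ->
  is_simplex A ->
  (forall i : 'I_n.+1, i != ord0 -> sqdist (A i) (A ord0) = v i) ->
  (forall i j : 'I_n.+1, i != ord0 -> j != ord0 -> i != j -> sqdist (A i) (A j) = u) ->
  let alpha := u + \sum_(1 <= i < n.+1) v i in
  let beta := u ^+ 2 + \sum_(1 <= i < n.+1) v i ^+ 2 in
  [/\ CM (facet A ord0) = (-1) ^+ n * n%:R * u ^+ (n - 1),
      innerCM (facet A ord0) = (-1) ^+ n.+1 * u ^+ n * (n%:R - 1),
      (forall j : 'I_n.+1, j != ord0 ->
         CM (facet A j) = (- u) ^+ (n - 3) *
           (- alpha ^+ 2 + (n%:R - 1) * beta - n%:R * v j ^+ 2 + 2 * alpha * v j)) &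
      (forall j : 'I_n.+1, j != ord0 ->
         innerCM (facet A j) = (- u) ^+ (n - 2) *
           ((n%:R - 2) * beta - alpha ^+ 2 + 2 * alpha * u - (n%:R - 1) * u ^+ 2
            - (n%:R - 1) * v j ^+ 2 + 2 * alpha * v j - 2 * u * v j))].
Proof.
move: A; case: n => [|[|[|n]]] A n3 //; move=> u0 _ hv hu alpha beta.
have c0 : - u != 0 by rewrite oppr_eq0 lt0r_neq0.
have ex : forall k : nat, (-u) ^+ k = (-1) ^+ k * u ^+ k by move=> k; exact: exprNn.
split.
- rewrite /CM.
  have e := @det_lowrank _ _ 2 (-u) (cm_mx (facet A ord0)) (U0c) (V0c u) c0
    (fun a b => etrans (@cm_mx_nat R d n.+3 (facet A ord0) (E0 u) (@facet0E R d n.+3 u A hu) a b) (@H0cm R n.+3 u a b)).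
  rewrite (L0cm R n.+2 u) in e.
  rewrite (@cancel_pow _ _ _ _ _ _ c0 e) ex /= !exprS.
  rewrite -!natr1; ring.
- rewrite /innerCM.
  have e := @det_lowrank _ _ 1 (-u) (inner_cm_mx (facet A ord0)) (U0) (V0 u) c0
    (fun a b => etrans (@facet0E R d n.+3 u A hu a b) (@H0in R n.+3 u a b)).
  rewrite (L0in R n.+2 u) in e.
  rewrite (@cancel_pow _ _ _ _ _ _ c0 e) ex /= !exprS.
  rewrite -!natr1; ring.
- move=> j j0; rewrite /CM.
  have e := @det_lowrank _ _ 4 (-u) (cm_mx (facet A j)) (Ujc (fun k => v (bump j k))) (Vjc u (fun k => v (bump j k))) c0
    (fun a b => etrans (@cm_mx_nat R d n.+3 (facet A j) _ (@facetjE R d n.+3 u v A j j0 hv hu) a b) (@Hjc R n.+3 u _ a b)).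
  rewrite (Ljc R n.+2 u) /= in e.
  rewrite (@cancel_pow _ _ _ _ _ _ c0 e) /alpha /beta (@sum_facet R n.+2 v j j0) (@sum_facet R n.+2 (fun i => v i ^+ 2) j j0).
  have -> : (n.+3 - 3 = n)%N by rewrite subSS subSS subSS subn0.
  have hS2 : \sum_(i < n.+2) v (bump j i.+1) * v (bump j i.+1) =
             \sum_(i < n.+2) v (bump j i.+1) ^+ 2 by apply: eq_bigr => i _; rewrite expr2.
  rewrite hS2 -!natr1; ring.
- move=> j j0; rewrite /innerCM.
  have e := @det_lowrank _ _ 3 (-u) (inner_cm_mx (facet A j)) (Ujin (fun k => v (bump j k))) (Vjin u (fun k => v (bump j k))) c0
    (fun a b => etrans (@facetjE R d n.+3 u v A j j0 hv hu a b) (@Hjin R n.+3 u _ a b)).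
  rewrite (Ljin R n.+2 u) /= in e.
  rewrite (@cancel_pow _ _ _ _ _ _ c0 e) /alpha /beta (@sum_facet R n.+2 v j j0) (@sum_facet R n.+2 (fun i => v i ^+ 2) j j0).
  have -> : (n.+3 - 2 = n.+1)%N by rewrite subSS subSS subn0.
  have hS2 : \sum_(i < n.+2) v (bump j i.+1) * v (bump j i.+1) =
             \sum_(i < n.+2) v (bump j i.+1) ^+ 2 by apply: eq_bigr => i _; rewrite expr2.
  rewrite hS2 -!natr1 [(- u) ^+ n.+1]exprS; ring.
Qed.
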